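(* Let $n\geq 2$, and let $\varphi$ be a skew morphism of $\mathbb Z_n$ with complexity $c$ and auto-order $m$. Then: (a) $c\geq 0$ and $m\geq 2$; (b) $\varphi$ is the trivial permutation if and only if $c=0$; (c) $\varphi$ is a non-trivial automorphism if and only if $c=1$; (d) $\varphi$ is a proper skew morphism if and only if $c\geq 2$; (e) if $c\geq 1$, then $\varphi'$ has complexity $c-1$ and auto-order $m$; (f) if $c\geq 1$, then $\varphi^{(c-1)}$ is an automorphism of order $m$.
   Context: A skew morphism of a finite group $G$ is a permutation $\varphi$ of $G$ fixing the identity such that for each $a\in G$ there is a non-negative integer $\pi_{\varphi}(a)$ (the power function) with $\varphi(ab)=\varphi(a)\varphi^{\pi_{\varphi}(a)}(b)$ for all $b\in G$; ${\rm ord}(\varphi)$ is the order of $\langle\varphi\rangle$. A skew morphism is proper if it is not a group automorphism. For a skew morphism $\varphi$ of $\mathbb Z_n$, the derived skew morphism $\varphi'$ is the skew morphism of $\mathbb Z_{{\rm ord}(\varphi)}$ given by $\varphi'(a)=\sigma_{\varphi}(a,1)=\sum_{0\leq i\leq a-1}\pi_{\varphi}(\varphi^i(1))$ (taken in $\mathbb Z_{{\rm ord}(\varphi)}$). For $n\geq 2$, since ${\rm ord}(\varphi)<n$, repeatedly taking derived skew morphisms eventually yields a skew morphism of a non-trivial cyclic group that is the trivial permutation (and whose derived skew morphism is the identity of the trivial group). Writing $\varphi^{(0)}=\varphi$, $\varphi^{(1)}=\varphi'$, and in general $\varphi^{(i)}$ for $\varphi$ with the derived-skew-morphism operation applied $i$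 times, the complexity $c$ of $\varphi$ is the number of steps $c$ such that $\varphi^{(c)}$ is this trivial permutation of a non-trivial cyclic group $\mathbb Z_m$, and $m$ is called the auto-order of $\varphi$. *)

(* Defs.v *)
(* Z_n is modelled as the residues {0,..,n-1} in nat; a map
   Z_n -> Z_n is a function f : nat -> nat, of which only the values on
   [0, n) matter. *)
From mathcomp Require Import all_boot.
Set Implicit Arguments. Unset Strict Implicit. Unset Printing Implicit Defensive.

Definition is_perm_on (n : nat) (f : nat -> nat) : Prop :=
  (forall x, x < n -> f x < n) /\
  (forall x y, x < n -> y < n -> f x = f y -> x = y).

Definition is_skew (n : nat) (f : nat -> nat) : Prop :=
  is_perm_on n f /\ f 0 = 0 /\
  forall a, a < n -> exists k : nat,
    forall b, b < n -> f ((a + b) %% n) = (f a + iter k f b) %% n.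

Definition is_aut (n : nat) (f : nat -> nat) : Prop :=
  is_perm_on n f /\
  forall a b, a < n -> b < n -> f ((a + b) %% n) = (f a + f b) %% n.

Definition is_trivial (n : nat) (f : nat -> nat) : Prop :=
  forall x, x < n -> f x = x.

(* ord(f): the order of <f>, i.e. least k >= 1 with f^k = id on [0,n).
   For a permutation of n points this k is <= n`!, so searching in
   [0, n`!] finds it. *)
Definition sk_ord (n : nat) (f : nat -> nat) : nat :=
  find (fun k => (0 < k) && all (fun x => iter k f x == x) (iota 0 n))
       (iota 0 (n`!).+1).

(* the power function pi_f(a), normalised to its least representative in
   [0, ord f) (it is only determined modulo ord f) *)
Definition sk_pow (n : nat) (f : nat -> nat) (a : nat) : nat :=
  find (fun k => all (fun b => f ((a + b) %% n) == (f a + iter k f b) %% n)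
                      (iota 0 n))
       (iota 0 (sk_ord n f)).

(* derived skew morphism: a skew morphism of Z_{ord f}, given as a pair
   (modulus, map) with f'(a) = sum_{i<a} pi_f(f^i(1)) mod ord f *)
Definition sk_deriv (p : nat * (nat -> nat)) : nat * (nat -> nat) :=
  let: (n, f) := p in
  (sk_ord n f,
   fun a => (\sum_(i < a) sk_pow n f (iter i f 1)) %% sk_ord n f).

Definition sk_deriv_iter (i : nat) (n : nat) (f : nat -> nat) :=
  iter i sk_deriv (n, f).

Definition sk_complexity (n : nat) (f : nat -> nat) (c m : nat) : Prop :=
  let p := sk_deriv_iter c n f in
  p.1 = m /\ 2 <= m /\ is_trivial p.1 p.2.

(* Main.v *)
Require Import Defs.
From mathcomp Require Import all_boot all_fingroup.
From mathcomp Require Import zify.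
From Stdlib Require Classical_Prop.
Set Implicit Arguments. Unset Strict Implicit. Unset Printing Implicit Defensive.


Lemma perm_period n f : is_perm_on n f ->
  exists k, [/\ 0 < k, k <= n`! & forall x, x < n -> iter k f x = x].
Proof.
case=> Hlt Hinj.
pose h (i : 'I_n) : 'I_n := Ordinal (Hlt i (ltn_ord i)).
have hinj : injective h.
  move=> i j /(congr1 val) /= /Hinj E; apply/val_inj/E; exact: ltn_ord.
pose p := perm hinj.
have Hp : forall k (i : 'I_n), val ((p ^+ k)%g i) = iter k f i.
  elim=> [|k IH] i; first by rewrite expg0 perm1.
  by rewrite expgSr permM permE /= IH.
exists #[p]%g; split.
- exact: order_gt0.
- rewrite -(card_Sn n) -cardsT; apply: dvdn_leq; first by rewrite cardsT card_Sn fact_gt0.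
  exact: cardSg (subsetT _).
- move=> x Hx; have := Hp #[p]%g (Ordinal Hx); rewrite expg_order perm1 /= => <-//.
Qed.


Lemma ord_spec n f : is_perm_on n f ->
  [/\ 0 < sk_ord n f, sk_ord n f <= n`!,
      forall x, x < n -> iter (sk_ord n f) f x = x &
      forall k, 0 < k -> k < sk_ord n f -> exists2 x, x < n & iter k f x != x].
Proof.
move=> Hp; have [k [k0 kle kid]] := perm_period Hp.
set P := (fun k => (0 < k) && all (fun x => iter k f x == x) (iota 0 n)).
have hP : has P (iota 0 (n`!).+1).
  apply/hasP; exists k; first by rewrite mem_iota /=; lia.
  rewrite /P k0 /=; apply/allP => x; rewrite mem_iota => /andP[_ Hx].
  by rewrite kid //.
have Hf := hP; rewrite has_find size_iota in Hf.
have := nth_find 0 hP; rewrite nth_iota // add0n => /andP[H0 /allP Hall].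
rewrite /sk_ord -/P; split => //.
- by move=> x Hx; apply/eqP/Hall; rewrite mem_iota; lia.
- move=> j j0 jlt; have := before_find 0 jlt.
  rewrite nth_iota; last by lia.
  rewrite add0n /P j0 /= => /negbT /allPn [x]; rewrite mem_iota => /andP[_ Hx] Hne.
  by exists x.
Qed.

Lemma iter_lt n f : (forall x, x < n -> f x < n) -> forall k x, x < n -> iter k f x < n.
Proof. by move=> H; elim=> [|k IH] x Hx //=; apply/H/IH. Qed.

Lemma iter_inj n f : is_perm_on n f -> forall k x y, x < n -> y < n ->
  iter k f x = iter k f y -> x = y.
Proof.
case=> Hl Hi; elim=> [|k IH] x y Hx Hy //= E.
by apply: IH => //; apply: Hi => //; apply: iter_lt.
Qed.

Lemma iter_period n f : is_perm_on n f -> forall q x, x < n ->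
  iter (q * sk_ord n f) f x = x.
Proof.
move=> Hp; have [_ _ Hid _] := ord_spec Hp.
elim=> [|q IH] x Hx //; by rewrite mulSn iterD IH // Hid.
Qed.

Lemma iter_mod n f : is_perm_on n f -> forall k x, x < n ->
  iter k f x = iter (k %% sk_ord n f) f x.
Proof.
move=> Hp k x Hx; rewrite {1}(divn_eq k (sk_ord n f)) addnC iterD.
by rewrite iter_period.
Qed.

Lemma iter_eq_mod n f : is_perm_on n f -> forall k k',
  (forall z, z < n -> iter k f z = iter k' f z) -> k %% sk_ord n f = k' %% sk_ord n f.
Proof.
move=> Hp.
suff H : forall k k', k %% sk_ord n f <= k' %% sk_ord n f ->
  (forall z, z < n -> iter k f z = iter k' f z) -> k %% sk_ord n f = k' %% sk_ord n f.
  move=> k k' E; case: (leqP (k %% sk_ord n f) (k' %% sk_ord n f)) => L.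
    exact: H.
  by symmetry; apply: H; [lia | move=> z Hz; rewrite E].
move=> k k' L E.
have [e0 _ _ Hmin] := ord_spec Hp.
set r := k %% sk_ord n f in L *; set r' := k' %% sk_ord n f in L *.
have E2 : forall z, z < n -> iter (r' - r) f z = z.
  move=> z Hz; apply: (iter_inj Hp (k := r)) => //.
    by apply: iter_lt => //; case: Hp.
  rewrite -iterD subnKC // /r /r' -!iter_mod //; exact/esym/E.
case: (posnP (r' - r)) => D; first by lia.
have [x Hx] := Hmin _ D (leq_ltn_trans (leq_subr _ _) (ltn_pmod _ e0)).
by rewrite E2 // eqxx.
Qed.

Lemma pow_spec n f : is_skew n f -> forall a, a < n -> forall b, b < n ->
  f ((a + b) %% n) = (f a + iter (sk_pow n f a) f b) %% n.
Proof.
move=> [Hp [H0 Hs]] a Ha.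
have [e0 _ _ _] := ord_spec Hp.
have [k0 Hk0] := Hs a Ha.
set P := (fun k => all (fun b => f ((a + b) %% n) == (f a + iter k f b) %% n) (iota 0 n)).
have hP : has P (iota 0 (sk_ord n f)).
  apply/hasP; exists (k0 %% sk_ord n f); first by rewrite mem_iota /= ltn_pmod.
  apply/allP => b; rewrite mem_iota => /andP[_ Hb].
  by rewrite -iter_mod // Hk0.
have Hf := hP; rewrite has_find size_iota in Hf.
have := nth_find 0 hP; rewrite nth_iota // add0n => /allP Hall b Hb.
by apply/eqP; apply: Hall; rewrite mem_iota; lia.
Qed.


Definition sig n f k a := \sum_(i < k) sk_pow n f (iter i f a).

Lemma mod_cancel n y z w : 0 < n -> z < n -> w < n ->
  (y + z) %% n = (y + w) %% n -> z = w.
Proof.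
move=> n0 zn wn /eqP; rewrite eqn_modDl => /eqP.
by rewrite !modn_small.
Qed.

Lemma sigma_spec n f : is_skew n f -> forall k a, a < n -> forall z, z < n ->
  iter k f ((a + z) %% n) = (iter k f a + iter (sig n f k a) f z) %% n.
Proof.
move=> Hs; have Hl : forall x, x < n -> f x < n by case: Hs => [[]].
elim=> [|k IH] a Ha z Hz.
  by rewrite /sig big_ord0.
rewrite iterS IH // pow_spec //; last by apply: iter_lt.
- by rewrite -iterD /sig big_ord_recr /= (addnC (\sum_(i < k) _)).
- by apply: iter_lt.
Qed.

Lemma sig_split n f a b y : sig n f (a + b) y = sig n f a y + sig n f b (iter a f y).
Proof.
rewrite /sig big_split_ord /=; congr (_ + _).
by apply: eq_bigr => i _; rewrite addnC iterD.
Qed.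

Lemma sig_e n f : is_skew n f -> forall y, y < n -> sig n f (sk_ord n f) y %% sk_ord n f = 0.
Proof.
move=> Hs y Hy; have Hp : is_perm_on n f by case: Hs.
have [e0 _ Hid _] := ord_spec Hp.
have Hl : forall x, x < n -> f x < n by case: Hp.
have n0 : 0 < n by lia.
rewrite -(mod0n (sk_ord n f)); apply: (iter_eq_mod Hp) => z Hz /=.
have := sigma_spec Hs (sk_ord n f) Hy Hz.
rewrite !Hid //; last by apply: ltn_pmod.
move=> E; symmetry; apply: (mod_cancel (n := n) (y := y)) => //; by apply: iter_lt.
Qed.

Lemma sig_mod n f : is_skew n f -> forall x y, y < n ->
  sig n f x y %% sk_ord n f = sig n f (x %% sk_ord n f) y %% sk_ord n f.
Proof.
move=> Hs x y Hy; have Hp : is_perm_on n f by case: Hs.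
have Hl : forall x, x < n -> f x < n by case: Hp.
rewrite {1}(divn_eq x (sk_ord n f)) addnC.
elim: (x %/ sk_ord n f) => [|q IH]; first by rewrite addn0.
rewrite mulSn (addnC (sk_ord n f)) addnA sig_split -modnDmr sig_e ?addn0 //.
by apply: iter_lt.
Qed.

Lemma sig0 n f : is_skew n f -> forall b, b < sk_ord n f -> sig n f b 0 %% sk_ord n f = b.
Proof.
move=> Hs b Hb; have Hp : is_perm_on n f by case: Hs.
have [Hl _] := Hp; have f0 : f 0 = 0 by case: Hs => _ [].
case: (posnP n) => n0.
  have [e0 _ _ Hmin] := ord_spec Hp.
  case: (posnP b) => b0; first by rewrite b0 /sig big_ord0 mod0n.
  by have [x] := Hmin _ b0 Hb; rewrite n0.
rewrite -{2}(modn_small Hb); symmetry; apply: (iter_eq_mod Hp) => z Hz.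
have := sigma_spec Hs b n0 Hz.
move=> E. have E1 : (0 + z) %% n = z by rewrite modn_small. rewrite E1 (iter_fix _ f0) in E. rewrite E modn_small //; by apply: iter_lt.
Qed.


Lemma sig_key n f : is_skew n f -> forall b u, u.+1 < n ->
  sig n f b u.+1 %% sk_ord n f = sig n f (sig n f b 1) u %% sk_ord n f.
Proof.
move=> Hs b u Hu; have Hp : is_perm_on n f by case: Hs.
have Hl : forall x, x < n -> f x < n by case: Hp.
have n1 : 1 < n by lia.
have n0 : 0 < n by lia.
symmetry; apply: (iter_eq_mod Hp) => z Hz.
have Huz : (u + z) %% n < n by apply: ltn_pmod.
have E1 := sigma_spec Hs b (n1 : 1 < n) Huz.
have E2 := sigma_spec Hs (sig n f b 1) (ltnW Hu : u < n) Hz.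
have E3 := sigma_spec Hs b (Hu : u.+1 < n) Hz.
have E4 := sigma_spec Hs b (n1 : 1 < n) (ltnW Hu : u < n).
rewrite add1n (modn_small Hu) in E4.
rewrite E2 modnDmr addnA in E1.
rewrite [RHS]modnDmr addnA add1n E3 E4 modnDml in E1.
apply: (mod_cancel (n := n) (y := iter b f 1 + iter (sig n f b 1) f u)) => //;
  try by apply: iter_lt.
Qed.

Lemma sig_claim n f : is_skew n f -> 1 < n -> forall u, u < n -> forall b, b < sk_ord n f ->
  sig n f b u %% sk_ord n f = iter u (fun a => sig n f a 1 %% sk_ord n f) b.
Proof.
move=> Hs n1; have Hp : is_perm_on n f by case: Hs.
have [e0 _ _ _] := ord_spec Hp.
elim=> [|u IH] Hu b Hb; first by rewrite sig0.
rewrite sig_key // sig_mod //. have := IH (ltnW Hu) (sig n f b 1 %% sk_ord n f) (ltn_pmod _ e0). move=> ->. by rewrite iterSr. lia.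
Qed.

Lemma ord_small n f : is_perm_on n f -> n < 2 -> sk_ord n f = 1.
Proof.
move=> Hp n2; have [e0 le _ _] := ord_spec Hp; move: e0 le.
have : n`! = 1 by clear -n2; case: n n2 => [|[|]].
lia.
Qed.

Lemma DS n f : is_skew n f ->
  is_skew (sk_ord n f) (fun a => sig n f a 1 %% sk_ord n f).
Proof.
move=> Hs; have Hp : is_perm_on n f by case: Hs.
have [Hl _] := Hp; have f0 : f 0 = 0 by case: Hs => _ [].
have [e0 _ _ _] := ord_spec Hp.
case: (ltnP n 2) => n2.
  rewrite (ord_small Hp n2); split; last split.
  - by split => [x _|x y]; rewrite ?modn1 //; lia.
  - by rewrite modn1.
  - by move=> a _; exists 0 => b _; rewrite !modn1.
have n0 : 0 < n by lia.
set e := sk_ord n f.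
set g := fun a => sig n f a 1 %% e.
have Hsp : forall a z, z < n ->
    iter a f ((1 + z) %% n) = (iter a f 1 + iter (g a) f z) %% n.
  by move=> a z Hz; rewrite sigma_spec // -iter_mod.
split; last split.
- split => [x _|a a' Ha Ha' E]; first by apply: ltn_pmod.
  rewrite -(modn_small Ha) -(modn_small Ha'); apply: (iter_eq_mod Hp) => c Hc.
  have Hn1 : n.-1 < n by lia.
  have Eu : iter a f 1 = iter a' f 1.
    have := Hsp a _ Hn1; have := Hsp a' _ Hn1.
    have -> : (1 + n.-1) %% n = 0 by rewrite add1n prednK // modnn.
    rewrite !(iter_fix _ f0) E => E1 E2.
    apply: (mod_cancel (n := n) (y := iter (g a') f n.-1)); try by apply: iter_lt.
    done. by rewrite addnC -E2 addnC -E1.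
  case: c Hc => [|z] Hz; first by rewrite !(iter_fix _ f0).
  have : (1 + z) %% n = z.+1 by rewrite add1n modn_small.
  move=> <-; rewrite !Hsp; [ | lia | lia].
  by rewrite Eu -/(g a) -/(g a') E.
- by rewrite /g /sig big_ord0 mod0n.
- move=> a Ha; exists (iter a f 1) => b Hb.
  rewrite /g -sig_mod // sig_split -sig_claim //; last by apply: iter_lt.
  by rewrite modnDm.
Qed.


Lemma skew_deriv p : is_skew p.1 p.2 -> is_skew (sk_deriv p).1 (sk_deriv p).2.
Proof. case: p => M g /=; exact: DS. Qed.

Lemma skew_iter n f : is_skew n f -> forall j,
  is_skew (sk_deriv_iter j n f).1 (sk_deriv_iter j n f).2.
Proof.
move=> Hs; elim=> [|j IH] //; rewrite /sk_deriv_iter iterS; exact: skew_deriv.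
Qed.

Lemma triv_ord M g : is_trivial M g -> sk_ord M g = 1.
Proof.
move=> Ht; rewrite /sk_ord (_ : M`! = (M`!).-1.+1); last by rewrite prednK // fact_gt0.
rewrite /=.
have -> : all (fun x => g x == x) (iota 0 M) = true.
  by apply/allP => x; rewrite mem_iota => /andP[_ Hx]; rewrite Ht.
by [].
Qed.

Lemma deriv1_triv p : (sk_deriv p).1 = 1 -> is_trivial (sk_deriv p).1 (sk_deriv p).2.
Proof.
case: p => M g /= E x; rewrite E => Hx; lia.
Qed.

Lemma fst_deriv q : (sk_deriv q).1 = sk_ord q.1 q.2.
Proof. by case: q. Qed.

Lemma triv_iter p : is_trivial p.1 p.2 -> forall i, (iter i.+1 sk_deriv p).1 = 1.
Proof.
move=> Ht; elim=> [|i IH].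
  by case: p Ht => M g /= Ht; apply: triv_ord.
rewrite iterS fst_deriv; apply: triv_ord.
exact: (deriv1_triv (p := iter i sk_deriv p) IH).
Qed.

Lemma triv_later n f j c : is_trivial (sk_deriv_iter j n f).1 (sk_deriv_iter j n f).2 ->
  j < c -> (sk_deriv_iter c n f).1 = 1.
Proof.
move=> Ht jc; have -> : c = (c - j).-1.+1 + j by lia.
by rewrite /sk_deriv_iter iterD; apply: triv_iter.
Qed.

Lemma aut_deriv_triv M g : is_skew M g -> 2 <= (sk_deriv (M, g)).1 ->
  is_trivial (sk_deriv (M, g)).1 (sk_deriv (M, g)).2 -> is_aut M g.
Proof.
move=> Hs /= Hm Ht; have Hp : is_perm_on M g by case: Hs.
have g0 : g 0 = 0 by case: Hs => _ [].
have [Hl _] := Hp.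
have M2 : 1 < M.
  case: (ltnP M 2) => // M2; move: Hm; rewrite ord_small //.
have M0 : 0 < M by lia.
have h1 : sk_pow M g 1 %% sk_ord M g = 1.
  by have := Ht 1 Hm; rewrite big_ord1.
have add1 : forall b, b < M -> g ((1 + b) %% M) = (g 1 + g b) %% M.
  by move=> b Hb; rewrite pow_spec // (iter_mod Hp) // h1.
have lin : forall a, a < M -> g a = (a * g 1) %% M.
  elim=> [|a IH] Ha; first by rewrite g0 mul0n mod0n.
  rewrite -(modn_small Ha) -add1n add1; last by lia.
  by rewrite IH; [rewrite modnDmr modnMml add1n mulSn | lia].
split => // a b Ha Hb.
rewrite lin; last by apply: ltn_pmod.
by rewrite (lin a Ha) (lin b Hb) modnMml modnDm mulnDl.
Qed.

Lemma sum_mod1 (F : nat -> nat) e : (forall i, F i %% e = 1 %% e) ->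
  forall x, (\sum_(i < x) F i) %% e = x %% e.
Proof.
move=> HF; elim=> [|x IH]; first by rewrite big_ord0.
by rewrite big_ord_recr /= -modnDm IH HF modnDm addn1.
Qed.

Lemma aut_triv_deriv n f : 2 <= n -> is_skew n f -> is_aut n f ->
  is_trivial (sk_deriv (n, f)).1 (sk_deriv (n, f)).2.
Proof.
move=> n2 Hs [Hp Ha] /= x Hx.
have [Hl _] := Hp.
have pi1 : forall y, y < n -> sk_pow n f y %% sk_ord n f = 1 %% sk_ord n f.
  move=> y Hy; apply: (iter_eq_mod Hp) => z Hz /=.
  apply: (mod_cancel (n := n) (y := f y)); [lia | by apply: iter_lt | by apply: Hl | ].
  by rewrite -pow_spec // Ha.
rewrite (sum_mod1 (F := fun i => sk_pow n f (iter i f 1))) ?(modn_small Hx) //.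
  by move=> i; apply: pi1; apply: iter_lt.
Qed.


Theorem lemma4p1 (n : nat) (f : nat -> nat) (c m : nat) :
  2 <= n -> is_skew n f -> sk_complexity n f c m ->
  ((0 <= c /\ 2 <= m) /\
   (is_trivial n f <-> c = 0) /\
   ((is_aut n f /\ ~ is_trivial n f) <-> c = 1) /\
   (~ is_aut n f <-> 2 <= c) /\
   (1 <= c ->
      sk_complexity (sk_deriv (n, f)).1 (sk_deriv (n, f)).2 (c - 1) m) /\
   (1 <= c ->
      is_aut (sk_deriv_iter (c - 1) n f).1 (sk_deriv_iter (c - 1) n f).2 /\
      sk_ord (sk_deriv_iter (c - 1) n f).1 (sk_deriv_iter (c - 1) n f).2 = m)).
Proof.
move=> n2 Hs [E1 [Hm Ht]].
have Hp : is_perm_on n f by case: Hs.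
have Pc : forall j, j < c -> ~ is_trivial (sk_deriv_iter j n f).1 (sk_deriv_iter j n f).2.
  by move=> j jc T; have := triv_later T jc; rewrite E1; lia.
have tc0 : is_trivial n f <-> c = 0.
  split; last by move=> c0; rewrite c0 in Ht.
  move=> T; case: (posnP c) => // c0; by case: (Pc 0 c0).
have aut_triv : is_trivial n f -> is_aut n f.
  move=> T; split => // a b Ha Hb; rewrite !T //; last by apply: ltn_pmod; lia.
have Hf : 1 <= c ->
    is_aut (sk_deriv_iter (c - 1) n f).1 (sk_deriv_iter (c - 1) n f).2 /\
    sk_ord (sk_deriv_iter (c - 1) n f).1 (sk_deriv_iter (c - 1) n f).2 = m.
  move=> c1; have Hc : c = (c - 1).+1 by lia.
  set q := sk_deriv_iter (c - 1) n f.
  have Eq : sk_deriv q = sk_deriv_iter c n f by rewrite Hc /q /sk_deriv_iter iterS subn1.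
  have Eq2 : sk_deriv (q.1, q.2) = sk_deriv q by case: q {Eq}.
  split.
    apply: aut_deriv_triv; first exact: skew_iter.
      by rewrite Eq2 Eq E1.
    by rewrite Eq2 Eq.
  by rewrite -fst_deriv Eq.
have tc1 : (is_aut n f /\ ~ is_trivial n f) <-> c = 1.
  split.
    move=> [A NT]; have T1 := aut_triv_deriv n2 Hs A.
    case: (ltnP c 2) => c2; first by move: NT; rewrite tc0; lia.
    by case: (Pc 1 c2).
  move=> c1; have := Hf; rewrite c1 => /(_ isT) [A _]; split => //.
  by rewrite tc0 c1.
split; first by [].
split; first exact: tc0.
split; first exact: tc1.
split.
  split.
    move=> NA; case: (ltnP c 2) => // c2.
    case: (posnP c) => c0; first by case: NA; apply: aut_triv; rewrite tc0.
    have c1 : c = 1 by lia.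
    by case: NA; case: (proj2 tc1 c1).
  move=> c2 A; case: (Classical_Prop.classic (is_trivial n f)) => T.
  - by move: T; rewrite tc0; lia.
  - by have := proj1 tc1 (conj A T); lia.
split => //.
move=> c1; rewrite /sk_complexity /sk_deriv_iter.
have -> : ((sk_deriv (n, f)).1, (sk_deriv (n, f)).2) = sk_deriv (n, f) by [].
by rewrite -iterSr subn1 prednK.
Qed.
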